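(* Let $X,Y$ be finite abelian groups, $Q\in M_{X\times Y}(\mathbb T)$, and for $i\in X$, $c\in Y$ let $P_c^{(i)}=\sum_{a\in Y}\sum_{j\in X}L_{ac}W_{ia,j0}\in M_{X\times Y}(\mathbb C)$ (the image of $c^{(i)}=\sum_aL_{ac}u^{(i)}_{a0}$). For $k\in X$, $e\in Y$ let $\varepsilon_{ke}=\sum_{x\in X}F_{xk}e_{xe}$, where $(e_{xe})$ is the standard basis of $\mathbb C^{X\times Y}$. Then $$P_c^{(i)}(\varepsilon_{ke})=\frac{Q_{i,e-c}Q_{i-k,e}}{Q_{ie}Q_{i-k,e-c}}\,\varepsilon_{k,e-c}.$$ In particular, if $c_1+\dots+c_s=0$, then $P_{c_1}^{(i_1)}\cdots P_{c_s}^{(i_s)}$ is diagonal in the basis $(\varepsilon_{ke})$, for any $i_1,\dots,i_s\in X$.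
   Context: Finite abelian groups are written additively. For a finite abelian group $Z\simeq\mathbb Z_{N_1}\times\cdots\times\mathbb Z_{N_s}$, $F_Z=F_{N_1}\otimes\cdots\otimes F_{N_s}$ with $F_n=(e^{2\pi ijk/n})_{j,k\in\mathbb Z_n}$. Let $F=F_X$, $L=F_Y$, $M=|X|$, $N=|Y|$, and define $W_{ia,jb}\in M_{X\times Y}(\mathbb C)$ by $(W_{ia,jb})_{kc,ld}=\frac{1}{MN}\frac{Q_{ic}Q_{jd}}{Q_{id}Q_{jc}}F_{i-j,k-l}L_{a-b,c-d}$ ($i,j,k,l\in X$, $a,b,c,d\in Y$). *)

(* Defs.v *)
From mathcomp Require Import all_boot all_order all_algebra all_field.
Set Implicit Arguments. Unset Strict Implicit. Unset Printing Implicit Defensive.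
Import GRing.Theory Num.Theory.
Local Open Scope ring_scope.

(* A finite abelian group Z_{N_0 + 1} x ... x Z_{N_(s-1) + 1}, the t-th cyclic
   factor having order (N t).+1 (so every cyclic group Z_n, n >= 1, occurs). *)
Definition fgrp (s : nat) (N : 'I_s -> nat) : finType :=
  {dffun forall t : 'I_s, 'I_(N t).+1}.

Definition gzero s (N : 'I_s -> nat) : fgrp N :=
  finfun (fun t => (0 : 'I_(N t).+1)%R).
Definition gadd s (N : 'I_s -> nat) (x y : fgrp N) : fgrp N :=
  finfun (fun t => (x t + y t : 'I_(N t).+1)%R).
Definition gsub s (N : 'I_s -> nat) (x y : fgrp N) : fgrp N :=
  finfun (fun t => (x t - y t : 'I_(N t).+1)%R).

(* exp(2 pi i / n) in algC: n.-root (-1) is the root of -1 of minimal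
   nonnegative argument, i.e. exp(i pi / n); its square is exp(2 pi i / n). *)
Definition omega (n : nat) : algC := (n.-root (-1)) ^+ 2.

(* F_Z = F_{n_1} (x) ... (x) F_{n_s}, with F_n = (exp(2 pi i jk/n))_{j,k}. *)
Definition fourier s (N : 'I_s -> nat) (x y : fgrp N) : algC :=
  \prod_(t : 'I_s) omega (N t).+1 ^+ (nat_of_ord (x t) * nat_of_ord (y t))%N.

Definition vect (X Y : finType) := X -> Y -> algC.
Definition mat (X Y : finType) := X -> Y -> X -> Y -> algC.

Definition mapply (X Y : finType) (A : mat X Y) (v : vect X Y) : vect X Y :=
  fun k c => \sum_(l : X) \sum_(d : Y) A k c l d * v l d.

Section W.
Variables (s r : nat) (NX : 'I_s -> nat) (NY : 'I_r -> nat).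
Local Notation X := (fgrp NX).
Local Notation Y := (fgrp NY).
Variable Q : X -> Y -> algC.

Definition Wmat (i : X) (a : Y) (j : X) (b : Y) : mat X Y :=
  fun k c l d =>
    (#|X|%:R * #|Y|%:R)^-1 * (Q i c * Q j d / (Q i d * Q j c))
    * fourier (gsub i j) (gsub k l) * fourier (gsub a b) (gsub c d).

Definition Pmat (i : X) (c : Y) : mat X Y :=
  fun k e l d => \sum_(a : Y) \sum_(j : X)
                   fourier a c * Wmat i a j (gzero NY) k e l d.

Definition ebasis (x : X) (e : Y) : vect X Y :=
  fun l d => ((l == x) && (d == e))%:R.
Definition eps (k : X) (e : Y) : vect X Y :=
  fun l d => \sum_(x : X) fourier x k * ebasis x e l d.

Definition Pprod_apply (ics : seq (X * Y)) (v : vect X Y) : vect X Y :=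
  foldr (fun ic w => mapply (Pmat ic.1 ic.2) w) v ics.
End W.

(* Main.v *)
Require Import Defs.
From mathcomp Require Import all_boot all_order all_algebra all_field.
From mathcomp Require Import ring lra zify.
Import Order.TTheory GRing.Theory Num.Theory.
Local Open Scope ring_scope.

Lemma crux (R : realFieldType) (a b c d : R) : a <= c -> 0 <= b -> 0 <= d ->
  a^+2 + b^+2 = 1 -> c^+2 + d^+2 = 1 -> 0 <= b * c - a * d /\ a <= a * c + b * d.
Proof.
move=> hac hb hd h1 h2.
have c1 : c <= 1 by nra.
have [ha|ha] := lerP 0 a.
  have hdb : d <= b by nra.
  split; nra.
have [hc|hc] := lerP 0 c; split; try nra.
have hdb : b <= d by nra.
nra.
Qed.

Lemma uniq_up (R : realFieldType) (a b d : R) : 0 <= b -> 0 <= d ->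
  a^+2 + b^+2 = 1 -> a^+2 + d^+2 = 1 -> b = d.
Proof. move=> *; nra. Qed.

Lemma unit_re_im (u : algC) : `|u| = 1 -> 'Re u ^+ 2 + 'Im u ^+ 2 = 1.
Proof. by move=> h; rewrite -normC2_Re_Im h expr1n. Qed.

Lemma up_uniq (u v : algC) : `|u| = 1 -> `|v| = 1 -> 0 <= 'Im u -> 0 <= 'Im v ->
  'Re u = 'Re v -> u = v.
Proof.
move=> hu hv iu iv ruv.
pose a := in_algR (Creal_Re u); pose b := in_algR (Creal_Im u).
pose d := in_algR (Creal_Im v).
have h : b = d.
  apply: (@uniq_up algR a b d iu iv).
    by apply: val_inj; rewrite /= unit_re_im.
  by apply: val_inj; rewrite /= ruv unit_re_im.
have /= hi := congr1 val h.
by rewrite (Crect u) (Crect v) ruv hi.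
Qed.

Lemma unit_crux (w t : algC) : `|w| = 1 -> `|t| = 1 -> 0 <= 'Im w -> 0 <= 'Im t ->
  'Re w <= 'Re t -> 0 <= 'Im (w * t^*) /\ 'Re w <= 'Re (w * t^*).
Proof.
move=> hw ht iw it rwt.
rewrite ImM ReM Re_conj Im_conj.
pose a := in_algR (Creal_Re w); pose b := in_algR (Creal_Im w).
pose c := in_algR (Creal_Re t); pose d := in_algR (Creal_Im t).
have [] := @crux algR a b c d rwt iw it.
- by apply: val_inj; rewrite /= unit_re_im.
- by apply: val_inj; rewrite /= unit_re_im.
move=> h1 h2; split.
  move: h1; rewrite [_ <= _]/= => h1.
  by rewrite (_ : _ + _ = 'Im w * 'Re t - 'Re w * 'Im t) //; ring.
move: h2; rewrite [_ <= _]/= => h2.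
by rewrite (_ : _ - _ = 'Re w * 'Re t + 'Im w * 'Im t) //; ring.
Qed.

Lemma conj_root (u : algC) m : (0 < m)%N -> u ^+ m = 1 -> `|u| = 1 /\ u^* = u ^+ m.-1.
Proof.
case: m => // m _ hu.
have nu : `|u| = 1.
  by apply/eqP; rewrite -(@pexpr_eq1 _ _ m.+1) // -normrX hu normr1.
split => //=.
by rewrite -[u^*]mulr1 -hu exprS mulrA -normCKC nu expr1n mul1r.
Qed.

Lemma seq_max (s : seq algC) (P : pred algC) : has P s ->
  exists x, [/\ x \in s, P x & forall z, z \in s -> P z -> 'Re z <= 'Re x].
Proof.
elim: s => //= x s IH.
case Px: (P x); case Ps: (has P s) => //= _.
- have [m [ms Pm mmax]] := IH Ps.
  case/orP: (real_leVge (Creal_Re x) (Creal_Re m)) => le.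
    exists m; split => //; first by rewrite inE ms orbT.
    by move=> z; rewrite inE => /orP [/eqP -> _ // | zs Pz]; exact: mmax.
  exists x; split => //; first by rewrite inE eqxx.
  move=> z; rewrite inE => /orP [/eqP -> _ // | zs Pz].
  exact: le_trans (mmax _ zs Pz) le.
- exists x; split => //; first by rewrite inE eqxx.
  move=> z; rewrite inE => /orP [/eqP -> _ // | zs Pz].
  by move/hasPn: Ps => /(_ z zs); rewrite Pz.
- have [m [ms Pm mmax]] := IH Ps.
  exists m; split => //; first by rewrite inE ms orbT.
  by move=> z; rewrite inE => /orP [/eqP -> | zs Pz]; [rewrite Px | exact: mmax].
Qed.

Lemma prim1 : 1.-primitive_root (1 : algC).
Proof.
apply/andP; split => //; apply/forallP => -[[|//] ?] /=.
by rewrite unity_rootE expr1n eqxx.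
Qed.

Lemma omega_prim_aux m : (1 < m)%N -> m.-primitive_root (m.-root (-1 : algC) ^+ 2).
Proof.
move=> m1; have m0 : (0 < m)%N by apply: ltnW.
set y := m.-root (-1).
have hy : y ^+ m = -1 by rewrite /y rootCK.
have iy : 0 <= 'Im y by apply: Im_rootC_ge0.
have my : forall u, u ^+ m = -1 -> 0 <= 'Im u -> 'Re u <= 'Re y.
  by move=> u hu iu; apply: rootC_Re_max.
set M := (2 * m)%N.
have M0 : (0 < M)%N by rewrite /M muln_gt0.
have [g pg] := C_prim_root_exists M0.
set sG := [seq g ^+ i | i <- iota 0 M].
have memG : forall u, (u \in sG) = (u ^+ M == 1).
  move=> u; apply/idP/idP.
    by case/mapP => i _ ->; rewrite exprAC (prim_expr_order pg) expr1n.
  move/eqP => /(prim_rootP pg) [i ->]; apply/mapP; exists (val i) => //.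
  by rewrite mem_iota /= add0n ltn_ord.
have m1N : (-1 : algC) != 1.
  by rewrite lt_eqF // (lt_le_trans (ltrN10 _)) // ler01.
have yM : y ^+ M = 1 by rewrite /M mulnC exprM hy sqrrN expr1n.
have im1 : 'Im (-1 : algC) = 0 by apply/Creal_ImP; rewrite rpredN // real1.
have [t [tG /andP [t1 it] tmax]] :
    exists t, [/\ t \in sG, (t != 1) && (0 <= 'Im t) &
      forall z, z \in sG -> (z != 1) && (0 <= 'Im z) -> 'Re z <= 'Re t].
  apply: seq_max; apply/hasP; exists (-1).
    by rewrite memG /M exprM sqrrN !expr1n.
  by rewrite m1N im1 lexx.
have tM : t ^+ M = 1 by apply/eqP; rewrite -memG.
have [nt ct] := @conj_root t M M0 tM.
set sT := [seq t ^+ j | j <- iota 0 M].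
have memT : forall k, t ^+ k \in sT.
  move=> k; apply/mapP; exists (k %% M)%N; first by rewrite mem_iota add0n ltn_mod M0.
  by rewrite {1}(div.divn_eq k M) exprD mulnC exprM tM expr1n mul1r.
have gen : forall u, u \in sG -> u \in sT.
  move=> u uG; apply/idPn => uT.
  have [w [wG /andP [wT iw] wmax]] :
      exists w, [/\ w \in sG, (w \notin sT) && (0 <= 'Im w) &
        forall z, z \in sG -> (z \notin sT) && (0 <= 'Im z) -> 'Re z <= 'Re w].
    apply: seq_max; apply/hasP.
    case/orP: (real_leVge (real0 _) (Creal_Im u)) => iu.
      by exists u => //; rewrite uT iu.
    have uM : u ^+ M = 1 by apply/eqP; rewrite -memG.
    exists u^*; first by rewrite memG -rmorphXn uM rmorph1.
    rewrite Im_conj oppr_ge0 iu andbT.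
    apply/negP => /mapP [j _ uj]; move/negP: uT; apply.
    by rewrite -[u]conjCK uj rmorphXn /= ct -exprM memT.
  have wM : w ^+ M = 1 by apply/eqP; rewrite -memG.
  have [nw cw] := @conj_root w M M0 wM.
  have w1 : w != 1 by apply: contraNneq wT => ->; rewrite -(expr0 t) memT.
  have rwt : 'Re w <= 'Re t by apply: tmax => //; rewrite w1 iw.
  have [iw' rw'] := @unit_crux w t nw nt iw it rwt.
  have wtt : w * t^* * t = w by rewrite -mulrA -normCKC nt expr1n mulr1.
  have w'G : w * t^* \in sG by rewrite memG exprMn -rmorphXn tM rmorph1 wM mulr1.
  have w'T : w * t^* \notin sT.
    apply/negP => /mapP [j _ wj]; move/negP: wT; apply.
    by rewrite -wtt wj -exprSr memT.
  have rw'' := wmax _ w'G (introT andP (conj w'T iw')).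
  have e : w * t^* = w.
    apply: up_uniq => //; first by rewrite normrM nw norm_conjC nt mulr1.
    by apply/le_anti; rewrite rw' rw''.
  have w0 : w != 0 by rewrite -normr_eq0 nw oner_neq0.
  have : t^* = 1 by apply: (mulfI w0); rewrite e mulr1.
  by move/(congr1 (fun x : algC => x^*)); rewrite conjCK rmorph1 => /eqP; rewrite (negbTE t1).
have M1 : (1 < M)%N by rewrite /M; lia.
have ptM : M.-primitive_root t.
  have [a ta] := prim_rootP pg tM.
  have gT : g \in sT by apply: gen; rewrite memG (prim_expr_order pg).
  case/mapP: gT => j _ gj.
  rewrite ta prim_root_exp_coprime //.
  move: gj; rewrite ta -exprM -{1}(expr1 g) => /eqP.
  rewrite (eq_prim_root_expr pg) => /eqP hm.
  rewrite /coprime -dvdn1.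
  have : (gcdn a M %| gcdn M ((a * j) %% M))%N.
    by rewrite gcdn_modr dvdn_gcd dvdn_gcdr dvdn_mulr // dvdn_gcdl.
  by rewrite -hm modn_small // gcdn1.
have tm : t ^+ m = -1.
  have : (t ^+ m) ^+ 2 == 1 by rewrite -exprM mulnC tM.
  rewrite sqrf_eq1 => /orP [|/eqP //].
  rewrite -(expr0 t) (eq_prim_root_expr ptM) mod0n modn_small ?gtn_eqF //.
  by rewrite /M; lia.
have r1 : 'Re t <= 'Re y by apply: my.
have yG : y \in sG by rewrite memG yM.
have y1 : y != 1 by apply: contra_neq m1N => y1; rewrite -hy y1 expr1n.
have r2 : 'Re y <= 'Re t by apply: tmax => //; rewrite y1 iy.
have [ny _] := @conj_root y M M0 yM.
have yt : y = t by apply: up_uniq => //; apply/le_anti; rewrite r1 r2.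
rewrite yt; have := exp_prim_root ptM 2.
by rewrite /M gcdnMr mulKn.
Qed.

Lemma omega_prim n : (0 < n)%N -> n.-primitive_root (omega n).
Proof.
case: n => // -[_|n _]; last exact: omega_prim_aux.
by rewrite /omega root1C sqrrN expr1n; exact: prim1.
Qed.

Section G.
Variables (s : nat) (N : 'I_s -> nat).
Local Notation X := (fgrp N).
Implicit Types x y z e S c d i j k : X.

Lemma gaddE x y t : gadd x y t = (x t + y t)%R. Proof. by rewrite /gadd ffunE. Qed.
Lemma gsubE x y t : gsub x y t = (x t - y t)%R. Proof. by rewrite /gsub ffunE. Qed.
Lemma gzeroE t : gzero N t = 0%R. Proof. by rewrite /gzero ffunE. Qed.

Lemma gsubK x y : gadd (gsub x y) y = x.
Proof. by apply/ffunP => t; rewrite gaddE gsubE subrK. Qed.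
Lemma gaddK x y : gsub (gadd x y) y = x.
Proof. by apply/ffunP => t; rewrite gsubE gaddE addrK. Qed.
Lemma gsub0 x : gsub x (gzero N) = x.
Proof. by apply/ffunP => t; rewrite gsubE gzeroE subr0. Qed.
Lemma gsubKr x y : gsub x (gsub x y) = y.
Proof. by apply/ffunP => t; rewrite !gsubE subKr. Qed.
Lemma gsub_gsub e S c : gsub (gsub e S) c = gsub e (gadd c S).
Proof. by apply/ffunP => t; rewrite !gsubE gaddE opprD addrA addrAC. Qed.

Lemma cond1 c d e : (gadd c (gsub d e) == gzero N) = (d == gsub e c).
Proof.
have key t : (c t + (d t - e t) == 0) = (d t == e t - c t).
  by rewrite addrC addr_eq0 subr_eq addrC.
apply/eqP/eqP => h; apply/ffunP => t; move/ffunP: h => /(_ t).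
  by rewrite gaddE !gsubE gzeroE => /eqP; rewrite key => /eqP.
by rewrite gaddE !gsubE gzeroE => /eqP; rewrite -key => /eqP.
Qed.

Lemma cond2 k i j : (gsub k (gsub i j) == gzero N) = (j == gsub i k).
Proof.
have key t : (k t - (i t - j t) == 0) = (j t == i t - k t).
  by rewrite subr_eq0 eq_sym subr_eq addrC -subr_eq eq_sym.
apply/eqP/eqP => h; apply/ffunP => t; move/ffunP: h => /(_ t).
  by rewrite !gsubE gzeroE => /eqP; rewrite key => /eqP.
by rewrite !gsubE gzeroE => /eqP; rewrite -key => /eqP.
Qed.

Lemma om_mod n a b : (a = b %[mod n.+1])%N -> omega n.+1 ^+ a = omega n.+1 ^+ b.
Proof.
move=> h; have p := omega_prim _ (ltn0Sn n).
by rewrite -(prim_expr_mod p a) h prim_expr_mod.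
Qed.

Lemma fourier_addl x y z : fourier (gadd x y) z = fourier x z * fourier y z.
Proof.
rewrite /fourier -big_split; apply: eq_bigr => t _ /=.
rewrite gaddE -exprD; apply: om_mod.
by rewrite /= modnMml mulnDl.
Qed.

Lemma fourier_sym x y : fourier x y = fourier y x.
Proof. by apply: eq_bigr => t _; rewrite mulnC. Qed.

Lemma fourier0l y : fourier (gzero N) y = 1.
Proof. by apply: big1 => t _; rewrite gzeroE mul0n expr0. Qed.

Lemma fourier_neq0 x y : fourier x y != 0.
Proof.
rewrite /fourier prodf_seq_neq0; apply/allP => t _ /=.
by rewrite expf_neq0 // (prim_root_eq0 (omega_prim _ (ltn0Sn _))).
Qed.

Lemma fourier_subl x y z : fourier (gsub x y) z = fourier x z / fourier y z.
Proof.
have := fourier_addl (gsub x y) y z; rewrite gsubK => ->.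
by rewrite mulfK // fourier_neq0.
Qed.

Lemma fourier_subr x y z : fourier x (gsub y z) = fourier x y / fourier x z.
Proof. by rewrite fourier_sym fourier_subl !(fourier_sym x). Qed.

Lemma fourier_addr x y z : fourier x (gadd y z) = fourier x y * fourier x z.
Proof. by rewrite fourier_sym fourier_addl !(fourier_sym x). Qed.

Lemma fourier_sum y : \sum_(x : X) fourier x y = #|X|%:R * (y == gzero N)%:R.
Proof.
have [->|ny] := eqVneq y (gzero N).
  rewrite mulr1 (eq_bigr (fun _ => 1)); last by move=> x _; rewrite fourier_sym fourier0l.
  by rewrite sumr_const.
rewrite mulr0.
have [t yt] : exists t, y t != 0%R.
  case: (pickP (fun t => y t != 0%R)) => [t yt|h]; first by exists t.
  move/eqP: ny; case; apply/ffunP => t; rewrite gzeroE.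
  by move: (h t) => /negbFE/eqP.
have yt0 : (0 < y t)%N.
  rewrite lt0n; apply: contra yt => /eqP h; apply/eqP; exact: val_inj.
have Nt : (0 < N t)%N by have := ltn_ord (y t); lia.
pose z : X := finfun (fun u : 'I_s => (if u == t then inord 1 else ord0) : 'I_(N u).+1).
have fz : fourier z y = omega (N t).+1 ^+ (y t).
  rewrite /fourier (bigD1 t) //= big1 ?mulr1.
    by rewrite ffunE eqxx inordK ?mul1n.
  by move=> u /negbTE hu; rewrite ffunE hu mul0n expr0.
have fz1 : fourier z y != 1.
  rewrite fz -(expr0 (omega (N t).+1)) (eq_prim_root_expr (omega_prim _ (ltn0Sn _))).
  by rewrite mod0n modn_small // -lt0n.
have inj : injective (fun x => gadd x z).
  by move=> a b /(congr1 (fun v => gsub v z)); rewrite !gaddK.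
have e := reindex_inj (op := +%R) (x := 0) (P := predT) (F := fun x => fourier x y) inj.
rewrite /= in e.
have e2 : \sum_(x : X) fourier (gadd x z) y = \sum_(x : X) fourier x y * fourier z y.
  by apply: eq_bigr => x _; rewrite fourier_addl.
rewrite e2 -mulr_suml in e.
apply/eqP; move: fz1; apply: contraR => S0.
have : (\sum_(x : X) fourier x y) * (1 - fourier z y) = 0.
  by rewrite mulrBr mulr1 -e subrr.
by move/eqP; rewrite mulf_eq0 (negbTE S0) /= subr_eq0 eq_sym.
Qed.

End G.

Lemma sum_delta (T : finType) (f : T -> algC) a : \sum_(j : T) f j * (j == a)%:R = f a.
Proof.
rewrite (bigD1 a) //= eqxx mulr1 big1 ?addr0 // => j /negbTE ->.
by rewrite mulr0.
Qed.

Lemma card_neq0 (T : finType) (t : T) : (#|T|%:R : algC) != 0.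
Proof. by rewrite pnatr_eq0 -lt0n; apply/card_gt0P; exists t. Qed.

Lemma aux (F : fieldType) (m n a b x : F) : n != 0 ->
  (m * n)^-1 * a * x * (n * b) = m^-1 * b * (a * x).
Proof.
move=> h; rewrite invfM; transitivity (m^-1 * (n^-1 * n) * b * (a * x)); first by ring.
by rewrite mulVf // mulr1.
Qed.

Lemma sum_scal (T : finType) (a : algC) (f g : T -> algC) :
  \sum_(t : T) (a * f t) * g t = a * \sum_(t : T) f t * g t.
Proof. by rewrite mulr_sumr; apply: eq_bigr => t _; rewrite mulrA. Qed.

Section Main.
Variables (s r : nat) (NX : 'I_s -> nat) (NY : 'I_r -> nat).
Local Notation X := (fgrp NX).
Local Notation Y := (fgrp NY).
Variable Q : X -> Y -> algC.

Lemma epsE (k : X) (e : Y) l d : eps k e l d = fourier l k * (d == e)%:R.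
Proof.
rewrite /eps (bigD1 l) //= big1 => [|x /negbTE xl].
  by rewrite /ebasis eqxx addr0.
by rewrite /ebasis eq_sym xl mulr0.
Qed.

Lemma Pval (i : X) (c : Y) l d l' e :
  Pmat Q i c l d l' e = (#|X|%:R)^-1 * (gadd c (gsub d e) == gzero NY)%:R *
     \sum_(j : X) (Q i d * Q j e / (Q i e * Q j d)) * fourier (gsub i j) (gsub l l').
Proof.
rewrite /Pmat exchange_big /= mulr_sumr; apply: eq_bigr => j _.
rewrite /Wmat.
have -> : \sum_(a : Y) fourier a c * ((#|X|%:R * #|Y|%:R)^-1 *
    (Q i d * Q j e / (Q i e * Q j d)) * fourier (gsub i j) (gsub l l') *
    fourier (gsub a (gzero NY)) (gsub d e))
   = ((#|X|%:R * #|Y|%:R)^-1 * (Q i d * Q j e / (Q i e * Q j d)) *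
      fourier (gsub i j) (gsub l l')) * \sum_(a : Y) fourier a (gadd c (gsub d e)).
  rewrite mulr_sumr; apply: eq_bigr => a _; rewrite gsub0 fourier_addr; ring.
rewrite fourier_sum.
have nY := @card_neq0 _ (gzero NY).
have nX := @card_neq0 _ (gzero NX).
by rewrite aux.
Qed.

Lemma inner_sum (w l k : X) :
  \sum_(l' : X) fourier w (gsub l l') * fourier l' k =
  fourier l w * (#|X|%:R * (gsub k w == gzero NX)%:R).
Proof.
rewrite -fourier_sum mulr_sumr; apply: eq_bigr => l' _.
rewrite fourier_sym fourier_subl fourier_subr.
by rewrite mulrAC mulrA.
Qed.

Lemma part1 i c k e l d : mapply (Pmat Q i c) (eps k e) l d =
  (Q i (gsub e c) * Q (gsub i k) e / (Q i e * Q (gsub i k) (gsub e c)))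
  * eps k (gsub e c) l d.
Proof.
rewrite /mapply.
have -> : \sum_(l' : X) \sum_(d' : Y) Pmat Q i c l d l' d' * eps k e l' d'
    = \sum_(l' : X) Pmat Q i c l d l' e * fourier l' k.
  apply: eq_bigr => l' _.
  under eq_bigr do rewrite epsE mulrA.
  by rewrite sum_delta.
under eq_bigr do rewrite Pval.
rewrite epsE cond1.
have [-> | nd] := eqVneq d (gsub e c); last first.
  by rewrite !mulr0; apply: big1 => l2 _; rewrite !mul0r.
rewrite ?eqxx mulr1.
under eq_bigr do rewrite -mulrA mulr_suml.
rewrite -mulr_sumr exchange_big /=.
under eq_bigr => j _ do rewrite sum_scal inner_sum cond2 !mulrA.
rewrite sum_delta gsubKr.
have nX := @card_neq0 _ (gzero NX).
by rewrite mulrC mulfK // mulr1.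
Qed.

Lemma mapply_ext (A : mat X Y) (w w' : vect X Y) l d :
  (forall l d, w l d = w' l d) -> mapply A w l d = mapply A w' l d.
Proof. by move=> h; apply: eq_bigr => ? _; apply: eq_bigr => ? _; rewrite h. Qed.

Lemma mapply_scale (A : mat X Y) lam (v : vect X Y) l d :
  mapply A (fun l d => lam * v l d) l d = lam * mapply A v l d.
Proof.
rewrite /mapply mulr_sumr; apply: eq_bigr => ? _; rewrite mulr_sumr.
by apply: eq_bigr => ? _; rewrite mulrCA.
Qed.

Lemma part2 (ics : seq (X * Y)) k e : exists lam, forall l d,
  Pprod_apply Q ics (eps k e) l d =
  lam * eps k (gsub e (foldr (fun ic acc => gadd ic.2 acc) (gzero NY) ics)) l d.
Proof.
elim: ics => [|[i c] ics [lam IH]] /=.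
  by exists 1 => l d; rewrite gsub0 mul1r.
set S := foldr _ _ ics in IH *.
exists (lam * (Q i (gsub (gsub e S) c) * Q (gsub i k) (gsub e S) /
   (Q i (gsub e S) * Q (gsub i k) (gsub (gsub e S) c)))) => l d.
rewrite (mapply_ext _ _ _ _ _ IH) mapply_scale part1 gsub_gsub.
by rewrite mulrA.
Qed.

End Main.

Theorem lemma3p9 (s r : nat) (NX : 'I_s -> nat) (NY : 'I_r -> nat)
  (Q : fgrp NX -> fgrp NY -> algC)
  (hQ : forall (x : fgrp NX) (y : fgrp NY), `|Q x y| = 1) :
  (forall (i : fgrp NX) (c : fgrp NY) (k : fgrp NX) (e : fgrp NY)
          (l : fgrp NX) (d : fgrp NY),
     mapply (Pmat Q i c) (eps k e) l d =
     (Q i (gsub e c) * Q (gsub i k) e / (Q i e * Q (gsub i k) (gsub e c)))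
       * eps k (gsub e c) l d)
  /\
  (forall ics : seq (fgrp NX * fgrp NY),
     foldr (fun ic acc => gadd ic.2 acc) (gzero NY) ics = gzero NY ->
     forall (k : fgrp NX) (e : fgrp NY), exists lam : algC,
       forall (l : fgrp NX) (d : fgrp NY),
         Pprod_apply Q ics (eps k e) l d = lam * eps k e l d).
Proof.
split; first by move=> *; exact: part1.
move=> ics h k e; have [lam H] := @part2 s r NX NY Q ics k e.
by exists lam => l d; rewrite H h gsub0.
Qed.
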